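(* Let $G_0$ be a non-abelian finite simple group such that the exact sequence $1\to\mathrm{Inn}(G_0)\to\mathrm{Aut}(G_0)\to\mathrm{Out}(G_0)\to1$ splits. Then for every integer $N\ge1$ and every finite group $G$, every extension of $G_0^N$ by $G$ is a semidirect product $G_0^N\rtimes G$ (i.e. every exact sequence $1\to G_0^N\to\Gamma\to G\to1$ splits).
   Context: A group $\Gamma$ is an extension of $N$ by $H$ if there is an exact sequence $1\to N\to\Gamma\to H\to1$. $\mathrm{Inn}$, $\mathrm{Aut}$, $\mathrm{Out}$ denote inner, all, and outer automorphism groups. *)

(* Defs.v *)
From mathcomp Require Import all_boot all_fingroup all_solvable.
Set Implicit Arguments. Unset Strict Implicit. Unset Printing Implicit Defensive.
Local Open Scope group_scope.

Definition Inn (gT : finGroupType) (G : {group gT}) : {set {perm gT}} :=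
  conj_aut G @* G.

Definition is_direct_power (gT rT : finGroupType) (M : {set gT}) (G0 : {set rT})
  (N : nat) : Prop :=
  exists Mi : 'I_N -> {group gT},
    \big[dprod/1]_(i < N) Mi i = M /\ forall i, Mi i \isog G0.

(* Main.v *)
Require Import Defs.
From mathcomp Require Import all_boot all_fingroup all_solvable.
Set Implicit Arguments. Unset Strict Implicit. Unset Printing Implicit Defensive.
Local Open Scope group_scope.

Lemma mk_aut (T : finGroupType) (G : {group T}) (h : T -> T) :
  {in G &, injective h} -> {in G, forall g, h g \in G} ->
  {in G &, {morph h : x y / x * y}} -> exists2 a, a \in Aut G & {in G, h =1 a}.
Proof.
move=> hinj hG hM.
have sub : h @: G \subset G by apply/subsetP=> _ /imsetP[g Gg ->]; exact: hG.
exists (perm_in hinj sub); last by move=> g Gg; rewrite perm_inE.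
rewrite inE perm_in_on /=; apply/morphicP=> x y Gx Gy.
by rewrite !perm_inE ?groupM // hM.
Qed.

Section Main.
Variables (g0T gT : finGroupType) (G0 : {group g0T}) (N : nat).
Variables (Mi : 'I_N -> {group gT}) (M Gamma : {group gT}).
Variable K : {group {perm g0T}}.
Variable f : forall i : 'I_N, {morphism G0 >-> gT}.
Hypothesis injf : forall i, 'injm (f i).
Hypothesis fim : forall i, f i @* G0 = Mi i.
Hypothesis simG0 : simple G0.
Hypothesis nabG0 : ~~ abelian G0.
Hypothesis tiK : Inn G0 :&: K = 1.
Hypothesis InnK : Inn G0 * K = Aut G0.
Hypothesis defM : \big[dprod/1]_(i < N) Mi i = M.
Hypothesis nMG : M <| Gamma.

Lemma isoMi i : Mi i \isog G0.
Proof. by rewrite isog_sym; apply/isogP; exists (f i). Qed.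

Lemma Mi_normal i : Mi i <| M.
Proof. by have := defM; rewrite (bigD1 i) //= => /dprod_normal2[]. Qed.

Lemma Mi_sub i : Mi i \subset M.
Proof. exact: normal_sub (Mi_normal i). Qed.

Lemma Mi_cent i j : i != j -> Mi j \subset 'C(Mi i).
Proof.
move=> nij; have := defM; rewrite (bigD1 i) //= => D.
have [[A R eA eR] _ cRi _] := dprodP D.
apply: subset_trans cRi; rewrite ?eA eR -(bigdprodWY eR).
apply: sub_gen; apply: (bigcup_max j) => //; by rewrite eq_sym.
Qed.

Lemma nab_Mi i : ~~ abelian (Mi i).
Proof. by rewrite (isog_abelian (isoMi i)). Qed.

Lemma Mi_inj i j : Mi i :=: Mi j -> i = j.
Proof.
move=> E; case: (eqVneq i j) => // nij.
have := Mi_cent nij; rewrite E => ab; by have := nab_Mi j; rewrite /abelian ab.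
Qed.

Lemma Mi_conj x i : x \in Gamma -> exists j, Mi i :^ x = Mi j.
Proof.
move=> Gx; have nMx : x \in 'N(M) := subsetP (normal_norm nMG) x Gx.
have nsAM : (Mi i :^ x)%G <| M by rewrite /= -(normP nMx) normalJ Mi_normal.
have simA : simple (Mi i :^ x)%G.
  by rewrite -(isog_simple (conj_isog (Mi i) x)) (isog_simple (isoMi i)).
have cardA : #|Mi i :^ x| = #|G0| by rewrite cardJg (card_isog (isoMi i)).
case: (pickP (fun j : 'I_N => (Mi i :^ x) :&: Mi j != 1)) => [j ntAj | all1].
  exists j; have nsI : (Mi i :^ x :&: Mi j)%G <| (Mi i :^ x)%G.
    apply: normalS (normal_sub nsAM) (normalI nsAM (Mi_normal j)).
    exact: subsetIl.
  have [_ /(_ _ nsI) [E|E]] := simpleP _ simA; first by rewrite /= E eqxx in ntAj.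
  have sA : Mi i :^ x \subset Mi j by rewrite -E /= subsetIr.
  apply/eqP; rewrite eqEcard sA (card_isog (isoMi j)) cardA leqnn //.
have cA : forall j, Mi j \subset 'C(Mi i :^ x).
  move=> j; apply/commG1P/trivgP.
  have := all1 j => /negbFE/eqP E; rewrite -E setIC.
  apply: commg_subI; rewrite subsetI subxx //=.
    exact: subset_trans (Mi_sub j) (normal_norm nsAM).
  exact: subset_trans (normal_sub nsAM) (normal_norm (Mi_normal j)).
have cM : M \subset 'C(Mi i :^ x).
  by rewrite -(bigdprodWY defM) gen_subG; apply/bigcupsP => j _; exact: cA.
have : abelian (Mi i :^ x) by apply: subset_trans cM; exact: normal_sub nsAM.
by rewrite -(isog_abelian (conj_isog (Mi i) x)) (negbTE (nab_Mi i)).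
Qed.


Definition sigma x i := odflt i [pick j | Mi i :^ x == Mi j].

Lemma sigmaP x i : x \in Gamma -> Mi i :^ x = Mi (sigma x i).
Proof.
move=> Gx; rewrite /sigma; case: pickP => [j /eqP //| none].
by have [j E] := Mi_conj i Gx; have := none j; rewrite E eqxx.
Qed.

Lemma sigma_uniq x i j : x \in Gamma -> Mi i :^ x = Mi j -> sigma x i = j.
Proof. by move=> Gx E; apply: Mi_inj; rewrite -(sigmaP i Gx). Qed.

Definition alpha x i g := invm (injf (sigma x i)) ((f i g) ^ x).

Lemma fMi i g : g \in G0 -> f i g \in f i @* G0.
Proof. by move=> Gg; rewrite mem_morphim. Qed.

Lemma fxMi x i g : x \in Gamma -> g \in G0 -> (f i g) ^ x \in f (sigma x i) @* G0.
Proof. by move=> Gx Gg; rewrite fim -(sigmaP i Gx) memJ_conjg -fim fMi. Qed.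

Lemma invm_in i y : y \in f i @* G0 -> invm (injf i) y \in G0.
Proof. by case/morphimP => a _ Ga ->; rewrite invmE. Qed.

Lemma alphaK x i g : x \in Gamma -> g \in G0 ->
  f (sigma x i) (alpha x i g) = (f i g) ^ x.
Proof. by move=> Gx Gg; rewrite /alpha invmK ?fxMi. Qed.

Lemma alpha_in x i g : x \in Gamma -> g \in G0 -> alpha x i g \in G0.
Proof. by move=> Gx Gg; rewrite /alpha invm_in ?fxMi. Qed.

Lemma alpha_aut x i : x \in Gamma ->
  exists2 a, a \in Aut G0 & {in G0, alpha x i =1 a}.
Proof.
move=> Gx; apply: mk_aut.
- move=> g h Gg Gh E; have := congr1 (f (sigma x i)) E.
  by rewrite !alphaK // => /conjg_inj /(injmP (injf i)) ->.
- by move=> g Gg; apply: alpha_in.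
move=> g h Gg Gh; rewrite /alpha (morphM (f i)) // conjMg.
by rewrite (morphM (invm_morphism (injf (sigma x i)))) ?fxMi.
Qed.

Lemma sigmaM x y i : x \in Gamma -> y \in Gamma ->
  sigma (x * y) i = sigma y (sigma x i).
Proof.
by move=> Gx Gy; apply: sigma_uniq; rewrite ?groupM // conjsgM !sigmaP.
Qed.

Lemma alphaM x y i g : x \in Gamma -> y \in Gamma -> g \in G0 ->
  alpha (x * y) i g = alpha y (sigma x i) (alpha x i g).
Proof.
move=> Gx Gy Gg; rewrite {2}/alpha alphaK // /alpha sigmaM // conjgM //.
Qed.

Lemma conj_prod (c : 'I_N -> gT) i z : (forall j, c j \in Mi j) -> z \in Mi i ->
  z ^ (\prod_(j < N) c j) = z ^ c i.
Proof.
move=> cM; have gen : forall r z, z \in Mi i ->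
    z ^ (\prod_(j <- r) c j) = z ^ (\prod_(j <- r | j == i) c j).
  elim=> [|a r IH] y My; first by rewrite !big_nil.
  rewrite !big_cons conjgM; case: eqP => [->|nai].
    by rewrite conjgM IH // groupJ.
  have cA : c a \in 'C(Mi i).
    have nia : i != a by apply/eqP => E; apply: nai; rewrite E.
    exact: (subsetP (Mi_cent nia)).
  by rewrite IH // /conjg -(centP cA y My) mulKg.
by move=> Mz; rewrite gen // big_pred1_eq.
Qed.


Lemma sub_Gamma : M \subset Gamma.
Proof. exact: normal_sub nMG. Qed.

Lemma sigma_M m i : m \in M -> sigma m i = i.
Proof.
move=> Mm; apply: sigma_uniq; first exact: (subsetP sub_Gamma).
exact/normP/(subsetP (normal_norm (Mi_normal i))).
Qed.

Lemma alpha_M m i c g : m \in M -> c \in Mi i ->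
  (forall z, z \in Mi i -> z ^ m = z ^ c) -> g \in G0 ->
  alpha m i g = g ^ (invm (injf i) c).
Proof.
move=> Mm Mc mc Gg; have fg : f i g \in f i @* G0 by exact: fMi.
have fc : c \in f i @* G0 by rewrite fim.
rewrite /alpha sigma_M // mc; last by rewrite -fim.
by rewrite morphJ // [invm_morphism _ (f i g)]invmE.
Qed.

Definition Hset := [set x in Gamma |
  [forall i, [exists s in K, [forall g in G0, alpha x i g == s g]]]].

Lemma inH x : x \in Gamma ->
  (forall i, exists2 s, s \in K & {in G0, alpha x i =1 s}) -> x \in Hset.
Proof.
move=> Gx hx; rewrite inE Gx /=; apply/forallP => i.
have [s Ks es] := hx i; apply/existsP; exists s; rewrite Ks /=.
by apply/forallP => g; apply/implyP => Gg; rewrite es.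
Qed.

Lemma Hin x : x \in Hset ->
  x \in Gamma /\ (forall i, exists2 s, s \in K & {in G0, alpha x i =1 s}).
Proof.
rewrite inE => /andP[Gx /forallP hx]; split => // i.
have /existsP[s /andP[Ks /forallP es]] := hx i; exists s => // g Gg.
by apply/eqP; exact: (implyP (es g) Gg).
Qed.

Lemma K_Aut : K \subset Aut G0.
Proof. by rewrite -InnK mulG_subr. Qed.

Lemma H_group : group_set Hset.
Proof.
apply/group_setP; split.
  apply: inH; first exact: group1.
  move=> i; exists 1; first exact: group1.
  move=> g Gg; rewrite /alpha (sigma_M _ (group1 _)) conjg1 invmE // perm1 //.
move=> x y /Hin[Gx hx] /Hin[Gy hy]; apply: inH; first exact: groupM.
move=> i; have [s Ks es] := hx i; have [t Kt et] := hy (sigma x i).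
exists (s * t); first exact: groupM.
move=> g Gg; rewrite alphaM // es // et ?permM //.
have AutS : s \in Aut G0 by apply: (subsetP K_Aut).
exact: (@Aut_closed _ G0 s AutS g Gg).
Qed.


Lemma center_G0 : 'Z(G0) = 1.
Proof.
have [_ /(_ _ (center_normal G0)) [//|E]] := simpleP _ simG0.
by case/negP: nabG0; rewrite /abelian -{1}E subsetIr.
Qed.

Lemma main_splits : [splits Gamma, over M].
Proof.
apply/splitsP; exists (Group H_group); apply/complP; split.
  apply/trivgP/subsetP => m /setIP[Mm Hm]; apply/set1P.
  have [c [cM em _]] := mem_bigdprod defM Mm.
  have cM' : forall j, c j \in Mi j by move=> j; exact: cM.
  have [_ hm] := Hin Hm.
  have c1 : forall i, c i = 1.
    move=> i; have [s Ks es] := hm i.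
    have fc : c i \in f i @* G0 by rewrite fim.
    set v := invm (injf i) (c i).
    have Gv : v \in G0 by exact: invm_in.
    have ea : {in G0, alpha m i =1 conj_aut G0 v}.
      move=> g Gg; rewrite (alpha_M Mm (cM' i)) // ?conj_autE //.
      by move=> z Mz; rewrite em (conj_prod (i:=i)) //.
    have InnV : conj_aut G0 v \in Inn G0.
      by rewrite /Inn mem_morphim // (subsetP (normG G0)).
    have sv : s = conj_aut G0 v.
      apply: (eq_Aut (subsetP K_Aut s Ks)).
        exact: (subsetP (Aut_conj_aut _ G0)).
      by move=> g Gg; rewrite -es // ea.
    have v1 : conj_aut G0 v = 1.
      have : conj_aut G0 v \in Inn G0 :&: K by rewrite inE InnV -sv Ks.
      by rewrite tiK => /set1P.
    have : v \in 'Z(G0).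
      rewrite inE Gv -ker_conj_aut; apply/kerP; first exact: (subsetP (normG G0)).
      exact: v1.
    rewrite center_G0 => /set1P v1'.
    by rewrite -(invmK (injf i) fc) -/v v1' morph1.
  by rewrite em big1.
apply/eqP; rewrite eqEsubset mul_subG ?sub_Gamma //=; last first.
  by apply/subsetP => x /Hin[].
apply/subsetP => x Gx.
have : forall i, exists g, g \in G0 /\
    exists2 s, s \in K & {in G0, forall h, alpha x i h = s (h ^ g)}.
  move=> i; have [a Aa ea] := alpha_aut i Gx.
  move: Aa; rewrite -InnK => /mulsgP[ci s Ici Ks Ea].
  case/morphimP: Ici => g _ Gg Eci; exists g; split => //; exists s => // h Gh.
  by rewrite ea // Ea Eci permM conj_autE.
case/fin_all_exists => gg hgg.
pose e j := f j (gg j)^-1.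
have eM : forall j, e j \in Mi j.
  by move=> j; rewrite -fim mem_morphim // groupV; case: (hgg j).
pose m := \prod_(j < N) e j.
have Mm : m \in M by apply: group_prod => j _; exact: (subsetP (Mi_sub j)).
have Gm : m \in Gamma by exact: (subsetP sub_Gamma).
rewrite -(mulKg m x); apply: mem_mulg; first by rewrite groupV.
apply: inH; first exact: groupM.
move=> i; have [Gg [s Ks es]] := hgg i; exists s => // h Gh.
have am : alpha m i h = h ^ (gg i)^-1.
  rewrite (alpha_M Mm (eM i)) //; last by move=> z Mz; rewrite (conj_prod (i:=i)).
  by rewrite /e invmE // groupV.
rewrite alphaM // am sigma_M // es ?conjgKV //.
by rewrite groupJ // groupV.
Qed.

End Main.

Theorem proposition2p8 (g0T : finGroupType) (G0 : {group g0T}) :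
  simple G0 -> ~~ abelian G0 ->
  [splits Aut G0, over Inn G0] ->
  forall (N : nat), (1 <= N)%N ->
  forall (hT : finGroupType) (G : {group hT})
         (gT : finGroupType) (Gamma M : {group gT}),
    M <| Gamma -> is_direct_power M G0 N -> Gamma / M \isog G ->
    [splits Gamma, over M].
Proof.
move=> simG0 nabG0 /splitsP[K /complP[tiK InnK]] N _ hT G gT Gamma M nMG.
case=> Mi [defM isoM] _.
have /fin_all_exists[f fP] : forall i, exists f : {morphism G0 >-> gT},
    'injm f /\ f @* G0 = Mi i.
  move=> i; have /isogP[f injf fim] : G0 \isog Mi i by rewrite isog_sym.
  by exists f.
exact: (main_splits (fun i => proj1 (fP i)) (fun i => proj2 (fP i))
  simG0 nabG0 tiK InnK defM nMG).
Qed.
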